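(* Fix $I_{ij},I_{jk},I_{ki}\in[0,\infty)$. Define $\rho_H:\mathbb{R}^3_{>0}\to\mathbb{R}^3_{>0}$ by $$\rho_H(r_i,r_j,r_k)=(l_{ij},l_{jk},l_{ki}),$$ where $l_{ij},l_{jk},l_{ki}>0$ are given by $$\cosh l_{ij}=\cosh r_i\cosh r_j+I_{ij}\sinh r_i\sinh r_j,$$ $$\cosh l_{jk}=\cosh r_j\cosh r_k+I_{jk}\sinh r_j\sinh r_k,$$ $$\cosh l_{ki}=\cosh r_k\cosh r_i+I_{ki}\sinh r_k\sinh r_i.$$ Then $\rho_H$ is injective, and it is a smooth embedding. Equivalently, for a fixed hyperbolic triangle there is at most one configuration of three circles, centered at its vertices, whose pairwise inversive distances are $I_{ij},I_{jk},I_{ki}$.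
   Context: The inversive distance of two hyperbolic circles of radii $r_1,r_2$ whose centers are at distance $l$ is $$\frac{\cosh l-\cosh r_1\cosh r_2}{\sinh r_1\sinh r_2}.$$ *)

(* Defs.v *)
From Stdlib Require Import Reals Lra.
Open Scope R_scope.

Definition acosh (x : R) : R := ln (x + sqrt (x * x - 1)).

(* Length of the edge between the centres of two circles of radii r1, r2
   with inversive distance I: the l > 0 with
   cosh l = cosh r1 cosh r2 + I sinh r1 sinh r2. *)
Definition edge_len (I r1 r2 : R) : R :=
  acosh (cosh r1 * cosh r2 + I * sinh r1 * sinh r2).

Definition rhoH (Iij Ijk Iki : R) (r : R * R * R) : R * R * R :=
  let '(ri, rj, rk) := r in
  (edge_len Iij ri rj, edge_len Ijk rj rk, edge_len Iki rk ri).

Definition pos3 (r : R * R * R) : Prop :=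
  let '(a, b, c) := r in 0 < a /\ 0 < b /\ 0 < c.

Definition dist3 (r s : R * R * R) : R :=
  let '(a, b, c) := r in let '(a', b', c') := s in
  Rmax (Rabs (a - a')) (Rmax (Rabs (b - b')) (Rabs (c - c'))).

Definition cont3 (f : R * R * R -> R) : Prop :=
  forall x, pos3 x -> forall eps, 0 < eps -> exists delta, 0 < delta /\
    forall y, pos3 y -> dist3 x y < delta -> Rabs (f y - f x) < eps.

Definition has_partials (f d1 d2 d3 : R * R * R -> R) : Prop :=
  forall a b c, pos3 (a, b, c) ->
    derivable_pt_lim (fun x => f (x, b, c)) a (d1 (a, b, c)) /\
    derivable_pt_lim (fun x => f (a, x, c)) b (d2 (a, b, c)) /\
    derivable_pt_lim (fun x => f (a, b, x)) c (d3 (a, b, c)).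

Fixpoint Ck (n : nat) (f : R * R * R -> R) : Prop :=
  cont3 f /\
  match n with
  | O => True
  | S m => exists d1 d2 d3, has_partials f d1 d2 d3 /\ Ck m d1 /\ Ck m d2 /\ Ck m d3
  end.

Definition smooth3 (f : R * R * R -> R) : Prop := forall n, Ck n f.

Definition comp1 (p : R * R * R) : R := let '(a, _, _) := p in a.
Definition comp2 (p : R * R * R) : R := let '(_, b, _) := p in b.
Definition comp3 (p : R * R * R) : R := let '(_, _, c) := p in c.

Definition det3 (a11 a12 a13 a21 a22 a23 a31 a32 a33 : R) : R :=
  a11 * (a22 * a33 - a23 * a32) - a12 * (a21 * a33 - a23 * a31)
  + a13 * (a21 * a32 - a22 * a31).

Definition partials_at (g : R * R * R -> R) (a b c d1 d2 d3 : R) : Prop :=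
  derivable_pt_lim (fun x => g (x, b, c)) a d1 /\
  derivable_pt_lim (fun x => g (a, x, c)) b d2 /\
  derivable_pt_lim (fun x => g (a, b, x)) c d3.

Definition immersion3 (F : R * R * R -> R * R * R) : Prop :=
  forall a b c, pos3 (a, b, c) ->
  exists J11 J12 J13 J21 J22 J23 J31 J32 J33 : R,
    partials_at (fun p => comp1 (F p)) a b c J11 J12 J13 /\
    partials_at (fun p => comp2 (F p)) a b c J21 J22 J23 /\
    partials_at (fun p => comp3 (F p)) a b c J31 J32 J33 /\
    det3 J11 J12 J13 J21 J22 J23 J31 J32 J33 <> 0.

(* F is a smooth embedding of R^3_{>0}: smooth components, immersion,
   injective, and a homeomorphism onto its image (continuous inverse). *)
Definition smooth_embedding3 (F : R * R * R -> R * R * R) : Prop :=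
  smooth3 (fun p => comp1 (F p)) /\ smooth3 (fun p => comp2 (F p)) /\
  smooth3 (fun p => comp3 (F p)) /\
  immersion3 F /\
  (forall x y, pos3 x -> pos3 y -> F x = F y -> x = y) /\
  (forall x, pos3 x -> forall eps, 0 < eps -> exists delta, 0 < delta /\
    forall y, pos3 y -> dist3 (F x) (F y) < delta -> dist3 x y < eps).

(* Main.v *)
Require Import Defs.
From Stdlib Require Import Reals Lra Psatz FunctionalExtensionality.
Open Scope R_scope.

Lemma dpl_eq f x l l' : derivable_pt_lim f x l -> l = l' -> derivable_pt_lim f x l'.
Proof. intros H ->; exact H. Qed.

Lemma dpl_inv f x l : derivable_pt_lim f x l -> f x <> 0 ->
  derivable_pt_lim (fun y => / f y) x (- l / (f x * f x)).
Proof.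
  intros H Hn.
  assert (pr : derivable_pt f x) by (exists l; exact H).
  apply (derive_pt_eq_1 _ _ _ (derivable_pt_inv f x Hn pr)).
  rewrite derive_pt_inv. rewrite (derive_pt_eq_0 _ _ _ pr H). unfold Rsqr. reflexivity.
Qed.

Lemma dpl_cont f x l : derivable_pt_lim f x l -> continuity_pt f x.
Proof. intros H. apply derivable_continuous_pt. exists l; exact H. Qed.

Lemma cont_pt_eps h c : continuity_pt h c -> forall eps, 0 < eps ->
  exists del, 0 < del /\ forall z, Rabs (z - c) < del -> Rabs (h z - h c) < eps.
Proof.
  intros H eps He. destruct (H eps He) as [del [Hd Hz]].
  exists del; split; [exact Hd|]. intros z Hzc.
  destruct (Req_dec z c) as [->|Hne].
  - rewrite Rminus_diag, Rabs_R0; exact He.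
  - apply (Hz z). split; [split; [exact I| congruence] | exact Hzc].
Qed.

Lemma dist3_bounds a b c a' b' c' :
  Rabs (a - a') <= dist3 (a,b,c) (a',b',c') /\
  Rabs (b - b') <= dist3 (a,b,c) (a',b',c') /\
  Rabs (c - c') <= dist3 (a,b,c) (a',b',c').
Proof.
  simpl. split; [apply Rmax_l|]. split.
  - eapply Rle_trans; [apply Rmax_l| apply Rmax_r].
  - eapply Rle_trans; [apply Rmax_r| apply Rmax_r].
Qed.

Lemma dist3_lt a b c a' b' c' e :
  Rabs (a - a') < e -> Rabs (b - b') < e -> Rabs (c - c') < e -> dist3 (a,b,c) (a',b',c') < e.
Proof. intros. simpl. repeat apply Rmax_lub_lt; assumption. Qed.

Lemma cont3_ext f g : cont3 f -> (forall p, f p = g p) -> cont3 g.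
Proof. intros H E. replace g with f; [exact H|]. apply functional_extensionality; exact E. Qed.

Lemma cont3_const k : cont3 (fun _ => k).
Proof. intros x _ eps He. exists 1; split; [lra|]. intros. rewrite Rminus_diag, Rabs_R0; lra. Qed.

Lemma cont3_p1 : cont3 comp1.
Proof. intros [[a b] c] _ eps He. exists eps; split; [lra|]. intros [[a' b'] c'] _ Hd.
  destruct (dist3_bounds a b c a' b' c') as [H _]. simpl. rewrite Rabs_minus_sym. lra. Qed.
Lemma cont3_p2 : cont3 comp2.
Proof. intros [[a b] c] _ eps He. exists eps; split; [lra|]. intros [[a' b'] c'] _ Hd.
  destruct (dist3_bounds a b c a' b' c') as [_ [H _]]. simpl. rewrite Rabs_minus_sym. lra. Qed.
Lemma cont3_p3 : cont3 comp3.
Proof. intros [[a b] c] _ eps He. exists eps; split; [lra|]. intros [[a' b'] c'] _ Hd.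
  destruct (dist3_bounds a b c a' b' c') as [_ [_ H]]. simpl. rewrite Rabs_minus_sym. lra. Qed.

Lemma cont3_plus f g : cont3 f -> cont3 g -> cont3 (fun p => f p + g p).
Proof.
  intros Hf Hg x Hx eps He.
  destruct (Hf x Hx (eps/2)) as [d1 [Hd1 H1]]; [lra|].
  destruct (Hg x Hx (eps/2)) as [d2 [Hd2 H2]]; [lra|].
  exists (Rmin d1 d2); split; [apply Rmin_pos; lra|]. intros y Hy Hxy.
  specialize (H1 y Hy (Rlt_le_trans _ _ _ Hxy (Rmin_l _ _))).
  specialize (H2 y Hy (Rlt_le_trans _ _ _ Hxy (Rmin_r _ _))).
  replace (f y + g y - (f x + g x)) with ((f y - f x) + (g y - g x)) by ring.
  eapply Rle_lt_trans; [apply Rabs_triang|]. lra.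
Qed.

Lemma cont3_comp h f : cont3 f -> (forall x, pos3 x -> continuity_pt h (f x)) ->
  cont3 (fun p => h (f p)).
Proof.
  intros Hf Hh x Hx eps He.
  destruct (cont_pt_eps h (f x) (Hh x Hx) eps He) as [d1 [Hd1 H1]].
  destruct (Hf x Hx d1 Hd1) as [d2 [Hd2 H2]].
  exists d2; split; [exact Hd2|]. intros y Hy Hxy. apply H1. apply H2; assumption.
Qed.

Lemma cont_pt_sq c : continuity_pt (fun z => z * z) c.
Proof. apply (dpl_cont _ _ (2*c)). apply (dpl_eq _ _ (1 * c + c * 1)); [|ring].
  exact (derivable_pt_lim_mult id id c 1 1 (derivable_pt_lim_id c) (derivable_pt_lim_id c)). Qed.

Lemma cont_pt_lin k c : continuity_pt (fun z => k * z) c.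
Proof. apply (dpl_cont _ _ (k*1)).
  exact (derivable_pt_lim_scal id k c 1 (derivable_pt_lim_id c)). Qed.

Lemma cont3_mult f g : cont3 f -> cont3 g -> cont3 (fun p => f p * g p).
Proof.
  intros Hf Hg.
  assert (Hm : cont3 (fun p => -1 * g p)) by (apply cont3_comp; [exact Hg| intros; apply cont_pt_lin]).
  assert (A : cont3 (fun p => (f p + g p) * (f p + g p))) by
    (apply (cont3_comp (fun z => z*z)); [apply cont3_plus; assumption| intros; apply cont_pt_sq]).
  assert (B : cont3 (fun p => (f p + -1 * g p) * (f p + -1 * g p))) by
    (apply (cont3_comp (fun z => z*z)); [apply cont3_plus; assumption| intros; apply cont_pt_sq]).
  assert (C : cont3 (fun p => -1 * ((f p + -1 * g p) * (f p + -1 * g p)))) by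
    (apply (cont3_comp (fun z => -1 * z)); [exact B| intros; apply cont_pt_lin]).
  assert (D := cont3_plus _ _ A C).
  apply (cont3_ext (fun p => /4 * ((f p + g p) * (f p + g p) + -1 * ((f p + -1 * g p) * (f p + -1 * g p))))).
  - apply (cont3_comp (fun z => /4 * z)); [exact D| intros; apply cont_pt_lin].
  - intros; field.
Qed.

Lemma Ck_cont n f : Ck n f -> cont3 f.
Proof. destruct n; simpl; tauto. Qed.

Lemma Ck_mono n : forall f, Ck (S n) f -> Ck n f.
Proof.
  induction n as [|n IH]; intros f H.
  - simpl in *. tauto.
  - destruct H as [Hc [d1 [d2 [d3 [Hp [H1 [H2 H3]]]]]]].
    split; [exact Hc|]. exists d1, d2, d3. split; [exact Hp|]. split; [auto|split; auto].
Qed.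

Lemma Ck_ext n f g : Ck n f -> (forall p, f p = g p) -> Ck n g.
Proof. intros H E. replace g with f; [exact H|]. apply functional_extensionality; exact E. Qed.

Lemma Ck_const n : forall k, Ck n (fun _ => k).
Proof.
  induction n as [|n IH]; intros k.
  - split; [apply cont3_const| exact I].
  - split; [apply cont3_const|]. exists (fun _ => 0), (fun _ => 0), (fun _ => 0).
    split; [|repeat split; apply IH].
    intros a b c _. repeat split; apply derivable_pt_lim_const.
Qed.

Lemma Ck_p1 n : Ck n comp1.
Proof. destruct n; split; try apply cont3_p1; [exact I|].
  exists (fun _ => 1), (fun _ => 0), (fun _ => 0). split; [|repeat split; apply Ck_const].
  intros a b c _. repeat split; [apply derivable_pt_lim_id| apply derivable_pt_lim_const ..]. Qed.
Lemma Ck_p2 n : Ck n comp2.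
Proof. destruct n; split; try apply cont3_p2; [exact I|].
  exists (fun _ => 0), (fun _ => 1), (fun _ => 0). split; [|repeat split; apply Ck_const].
  intros a b c _. repeat split; [apply derivable_pt_lim_const|apply derivable_pt_lim_id| apply derivable_pt_lim_const]. Qed.
Lemma Ck_p3 n : Ck n comp3.
Proof. destruct n; split; try apply cont3_p3; [exact I|].
  exists (fun _ => 0), (fun _ => 0), (fun _ => 1). split; [|repeat split; apply Ck_const].
  intros a b c _. repeat split; [apply derivable_pt_lim_const ..|apply derivable_pt_lim_id]. Qed.

Lemma Ck_plus n : forall f g, Ck n f -> Ck n g -> Ck n (fun p => f p + g p).
Proof.
  induction n as [|n IH]; intros f g Hf Hg.
  - split; [apply cont3_plus; apply Ck_cont with 0%nat; assumption| exact I].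
  - split; [apply cont3_plus; eapply Ck_cont; eassumption|].
    destruct Hf as [_ [d1 [d2 [d3 [Hp [H1 [H2 H3]]]]]]].
    destruct Hg as [_ [e1 [e2 [e3 [Hq [G1 [G2 G3]]]]]]].
    exists (fun p => d1 p + e1 p), (fun p => d2 p + e2 p), (fun p => d3 p + e3 p).
    split; [|repeat split; apply IH; assumption].
    intros a b c Hx. destruct (Hp a b c Hx) as [P1 [P2 P3]]. destruct (Hq a b c Hx) as [Q1 [Q2 Q3]].
    repeat split.
    + exact (derivable_pt_lim_plus _ _ _ _ _ P1 Q1).
    + exact (derivable_pt_lim_plus _ _ _ _ _ P2 Q2).
    + exact (derivable_pt_lim_plus _ _ _ _ _ P3 Q3).
Qed.

Lemma Ck_mult n : forall f g, Ck n f -> Ck n g -> Ck n (fun p => f p * g p).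
Proof.
  induction n as [|n IH]; intros f g Hf Hg.
  - split; [apply cont3_mult; apply Ck_cont with 0%nat; assumption| exact I].
  - split; [apply cont3_mult; eapply Ck_cont; eassumption|].
    assert (Hf' := Ck_mono _ _ Hf). assert (Hg' := Ck_mono _ _ Hg).
    destruct Hf as [_ [d1 [d2 [d3 [Hp [H1 [H2 H3]]]]]]].
    destruct Hg as [_ [e1 [e2 [e3 [Hq [G1 [G2 G3]]]]]]].
    exists (fun p => d1 p * g p + f p * e1 p), (fun p => d2 p * g p + f p * e2 p),
      (fun p => d3 p * g p + f p * e3 p).
    split; [|repeat split; apply Ck_plus; apply IH; assumption].
    intros a b c Hx. destruct (Hp a b c Hx) as [P1 [P2 P3]]. destruct (Hq a b c Hx) as [Q1 [Q2 Q3]].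
    repeat split.
    + exact (derivable_pt_lim_mult _ _ _ _ _ P1 Q1).
    + exact (derivable_pt_lim_mult _ _ _ _ _ P2 Q2).
    + exact (derivable_pt_lim_mult _ _ _ _ _ P3 Q3).
Qed.

Lemma Ck0_comp (h : R -> R) (P : R -> Prop) h'
  (Hd : forall y, P y -> derivable_pt_lim h y (h' y)) :
  forall f, cont3 f -> (forall p, pos3 p -> P (f p)) -> cont3 (fun p => h (f p)).
Proof.
  intros f Hf HP. apply cont3_comp; [exact Hf|].
  intros x Hx. eapply dpl_cont. apply Hd; auto.
Qed.

Lemma CkS_comp (h h' : R -> R) (P : R -> Prop) n
  (Hd : forall y, P y -> derivable_pt_lim h y (h' y))
  (IHh' : forall f, Ck n f -> (forall p, pos3 p -> P (f p)) -> Ck n (fun p => h' (f p)) ) :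
  forall f, Ck (S n) f -> (forall p, pos3 p -> P (f p)) -> Ck (S n) (fun p => h (f p)).
Proof.
  intros f Hf HP.
  split.
  - apply (Ck0_comp h P h' Hd); [eapply Ck_cont; eassumption| exact HP].
  - assert (Hf' := Ck_mono _ _ Hf).
    destruct Hf as [_ [d1 [d2 [d3 [Hp [H1 [H2 H3]]]]]]].
    exists (fun p => h' (f p) * d1 p), (fun p => h' (f p) * d2 p), (fun p => h' (f p) * d3 p).
    split; [|split; [|split]; apply Ck_mult; auto].
    intros a b c Hx. destruct (Hp a b c Hx) as [P1 [P2 P3]].
    assert (HP' := Hd _ (HP _ Hx)).
    split; [|split].
    + exact (derivable_pt_lim_comp _ h _ _ _ P1 HP').
    + exact (derivable_pt_lim_comp _ h _ _ _ P2 HP').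
    + exact (derivable_pt_lim_comp _ h _ _ _ P3 HP').
Qed.

Lemma inv_deriv y : 0 < y -> derivable_pt_lim Rinv y (-1 * (/ y * / y)).
Proof. intros Hy. eapply dpl_eq. apply (dpl_inv id). apply derivable_pt_lim_id. unfold id; lra.
  unfold id. field. lra. Qed.

Lemma Ck_inv n : forall f, Ck n f -> (forall p, pos3 p -> 0 < f p) -> Ck n (fun p => / f p).
Proof.
  induction n as [|n IH]; intros f Hf HP.
  - split; [|exact I]. apply (Ck0_comp Rinv (fun y => 0 < y) _ inv_deriv); [eapply Ck_cont; eassumption|exact HP].
  - apply (CkS_comp Rinv _ (fun y => 0 < y) n inv_deriv); auto.
    intros g Hg Hpos. apply Ck_mult; [apply Ck_const|]. apply Ck_mult; apply IH; auto.
Qed.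

Lemma sqrt_deriv y : 0 < y -> derivable_pt_lim sqrt y (/2 * / sqrt y).
Proof. intros Hy. eapply dpl_eq. apply derivable_pt_lim_sqrt; auto.
  assert (0 < sqrt y) by (apply sqrt_lt_R0; auto). field. lra. Qed.

Lemma Ck_sqrt n : forall f, Ck n f -> (forall p, pos3 p -> 0 < f p) -> Ck n (fun p => sqrt (f p)).
Proof.
  induction n as [|n IH]; intros f Hf HP.
  - split; [|exact I]. apply (Ck0_comp sqrt (fun y => 0 < y) _ sqrt_deriv); [eapply Ck_cont; eassumption|exact HP].
  - apply (CkS_comp sqrt _ (fun y => 0 < y) n sqrt_deriv); auto.
    intros g Hg Hpos. apply Ck_mult; [apply Ck_const|]. apply Ck_inv; [apply IH; auto|].
    intros p Hp; apply sqrt_lt_R0; auto.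
Qed.

Lemma Ck_coshsinh n : forall f, Ck n f -> Ck n (fun p => cosh (f p)) /\ Ck n (fun p => sinh (f p)).
Proof.
  induction n as [|n IH]; intros f Hf.
  - split; (split; [|exact I]).
    + apply (Ck0_comp cosh (fun _ => True) sinh); [intros; apply derivable_pt_lim_cosh|eapply Ck_cont; eassumption|auto].
    + apply (Ck0_comp sinh (fun _ => True) cosh); [intros; apply derivable_pt_lim_sinh|eapply Ck_cont; eassumption|auto].
  - split.
    + apply (CkS_comp cosh sinh (fun _ => True) n); auto. intros; apply derivable_pt_lim_cosh.
      intros g Hg _; apply IH; auto.
    + apply (CkS_comp sinh cosh (fun _ => True) n); auto. intros; apply derivable_pt_lim_sinh.
      intros g Hg _; apply IH; auto.
Qed.

Lemma cosh_lt x y : 0 <= x -> x < y -> cosh x < cosh y.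
Proof.
  intros Hx Hxy. unfold cosh. rewrite !exp_Ropp.
  assert (H1 : exp x < exp y) by (apply exp_increasing; auto).
  assert (H0 : 1 <= exp x) by (rewrite <- exp_0; destruct Hx as [Hx| <-]; [left; apply exp_increasing; auto| right; reflexivity]).
  assert (Hp : 0 < exp x * exp y) by nra.
  assert (Hk : / exp y - / exp x = - (exp y - exp x) / (exp x * exp y)) by (field; lra).
  assert (Hq : (exp y - exp x) / (exp x * exp y) < exp y - exp x).
  { assert (Hi : / (exp x * exp y) * (exp x * exp y) = 1) by (field; lra).
    assert (Hip : 0 < / (exp x * exp y)) by (apply Rinv_0_lt_compat; lra).
    assert (Hp1 : 1 < exp x * exp y) by nra.
    assert (Hl1 : / (exp x * exp y) < 1) by nra.
    unfold Rdiv. assert (0 < exp y - exp x) by lra. nra. }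
  lra.
Qed.

Lemma cosh_gt1 x : 0 < x -> 1 < cosh x.
Proof. intros. rewrite <- cosh_0. apply cosh_lt; lra. Qed.
Lemma sinh_pos x : 0 < x -> 0 < sinh x.
Proof. intros. rewrite <- sinh_0. apply sinh_lt; lra. Qed.

Definition Xf (I a b : R) := cosh a * cosh b + I * sinh a * sinh b.

Lemma Xf_gt1 I a b : 0 <= I -> 0 < a -> 0 < b -> 1 < Xf I a b.
Proof. intros HI Ha Hb. unfold Xf. assert (H1 := cosh_gt1 a Ha). assert (H2 := cosh_gt1 b Hb).
  assert (H3 := sinh_pos a Ha). assert (H4 := sinh_pos b Hb).
  assert (0 <= I * sinh a * sinh b) by (apply Rmult_le_pos; [apply Rmult_le_pos|]; lra). nra. Qed.

Lemma Xf_sym I a b : Xf I a b = Xf I b a.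
Proof. unfold Xf; ring. Qed.

Lemma Xf_lt I b x y : 0 <= I -> 0 < b -> 0 < x -> x < y -> Xf I x b < Xf I y b.
Proof. intros HI Hb Hx Hxy. unfold Xf. assert (H1 := cosh_lt x y (Rlt_le _ _ Hx) Hxy).
  assert (H2 := sinh_lt x y Hxy). assert (H3 := cosh_gt1 b Hb). assert (H4 := sinh_pos b Hb).
  assert (I * sinh x * sinh b <= I * sinh y * sinh b).
  { apply Rmult_le_compat_r; [lra|]. apply Rmult_le_compat_l; lra. }
  nra. Qed.

Definition ufun (y : R) := y + sqrt (y * y - 1).

Lemma acosh_eq y : acosh y = ln (ufun y).
Proof. reflexivity. Qed.

Lemma ufun_ge1 y : 1 <= y -> 1 <= ufun y.
Proof. intros. unfold ufun. assert (0 <= sqrt (y*y-1)) by apply sqrt_pos. lra. Qed.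

Lemma ufun_lt y z : 1 <= y -> y < z -> ufun y < ufun z.
Proof. intros. unfold ufun. assert (sqrt (y*y-1) <= sqrt (z*z-1)) by (apply sqrt_le_1_alt; nra). lra. Qed.

Lemma acosh_lt y z : 1 <= y -> y < z -> acosh y < acosh z.
Proof. intros. rewrite !acosh_eq. apply ln_increasing; [assert (Hu1 := ufun_ge1 y); lra| apply ufun_lt; auto]. Qed.

Lemma acosh_pos y : 1 < y -> 0 < acosh y.
Proof. intros. replace 0 with (acosh 1). apply acosh_lt; lra.
  rewrite acosh_eq. unfold ufun. replace (1*1-1) with 0 by ring. rewrite sqrt_0, Rplus_0_r. apply ln_1. Qed.

Lemma acosh_deriv y : 1 < y -> derivable_pt_lim acosh y (/ sqrt (y * y - 1)).
Proof.
  intros Hy.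
  assert (Hs : 0 < sqrt (y*y-1)) by (apply sqrt_lt_R0; nra).
  assert (Hsq : derivable_pt_lim (fun z => z * z - 1) y (1 * y + y * 1)).
  { eapply dpl_eq. apply (derivable_pt_lim_minus (fun z => z * z) (fct_cte 1)).
    exact (derivable_pt_lim_mult id id y 1 1 (derivable_pt_lim_id y) (derivable_pt_lim_id y)).
    apply derivable_pt_lim_const. unfold id; ring. }
  assert (Hr : derivable_pt_lim (fun z => sqrt (z*z-1)) y (/ (2 * sqrt (y*y-1)) * (1 * y + y * 1))).
  { assert (Hy2 : 0 < y*y-1) by nra.
    exact (derivable_pt_lim_comp (fun z => z*z-1) sqrt y _ _ Hsq (derivable_pt_lim_sqrt _ Hy2)). }
  assert (Hu : derivable_pt_lim ufun y (1 + / (2 * sqrt (y*y-1)) * (1 * y + y * 1))).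
  { exact (derivable_pt_lim_plus id (fun z => sqrt (z*z-1)) y _ _ (derivable_pt_lim_id y) Hr). }
  assert (Hpos : 0 < ufun y) by (unfold ufun; lra).
  assert (Hl := derivable_pt_lim_comp ufun ln y _ _ Hu (derivable_pt_lim_ln _ Hpos)).
  eapply dpl_eq. exact Hl. unfold ufun. field. lra.
Qed.

Definition Dl (I a b : R) := (sinh a * cosh b + I * cosh a * sinh b) * / sqrt (Xf I a b * Xf I a b - 1).

Lemma Xf_deriv I b a : derivable_pt_lim (fun x => Xf I x b) a (sinh a * cosh b + I * cosh a * sinh b).
Proof.
  unfold Xf.
  apply (derivable_pt_lim_plus (fun x => cosh x * cosh b) (fun x => I * sinh x * sinh b)).
  - apply derivable_pt_lim_scal_right. apply derivable_pt_lim_cosh.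
  - apply (derivable_pt_lim_scal_right (fun x => I * sinh x)).
    apply (derivable_pt_lim_scal sinh). apply derivable_pt_lim_sinh.
Qed.

Lemma edge_eq I a b : edge_len I a b = acosh (Xf I a b).
Proof. reflexivity. Qed.

Lemma edge_deriv_l I a b : 0 <= I -> 0 < a -> 0 < b ->
  derivable_pt_lim (fun x => edge_len I x b) a (Dl I a b).
Proof.
  intros HI Ha Hb.
  assert (H := derivable_pt_lim_comp (fun x => Xf I x b) acosh a _ _ (Xf_deriv I b a)
    (acosh_deriv _ (Xf_gt1 I a b HI Ha Hb))).
  eapply dpl_eq. exact H. unfold Dl. ring.
Qed.

Lemma edge_sym I a b : edge_len I a b = edge_len I b a.
Proof. rewrite !edge_eq, Xf_sym. reflexivity. Qed.

Lemma edge_deriv_r I a b : 0 <= I -> 0 < a -> 0 < b ->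
  derivable_pt_lim (fun x => edge_len I a x) b (Dl I b a).
Proof.
  intros. assert (E : (fun x => edge_len I a x) = (fun x => edge_len I x a)).
  { apply FunctionalExtensionality.functional_extensionality; intros; apply edge_sym. }
  rewrite E. apply edge_deriv_l; auto.
Qed.

Lemma Dl_pos I a b : 0 <= I -> 0 < a -> 0 < b -> 0 < Dl I a b.
Proof.
  intros HI Ha Hb. unfold Dl. assert (H := Xf_gt1 I a b HI Ha Hb).
  apply Rmult_lt_0_compat.
  - assert (H1 := cosh_gt1 a Ha). assert (H2 := cosh_gt1 b Hb).
    assert (H3 := sinh_pos a Ha). assert (H4 := sinh_pos b Hb).
    assert (0 <= I * cosh a * sinh b) by (apply Rmult_le_pos; [apply Rmult_le_pos|]; lra). nra.
  - apply Rinv_0_lt_compat, sqrt_lt_R0. nra.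
Qed.

Lemma edge_lt_l I b x y : 0 <= I -> 0 < b -> 0 < x -> x < y -> edge_len I x b < edge_len I y b.
Proof. intros. rewrite !edge_eq. apply acosh_lt; [left; apply Xf_gt1; auto| apply Xf_lt; auto]. Qed.

Lemma edge_lt_r I a x y : 0 <= I -> 0 < a -> 0 < x -> x < y -> edge_len I a x < edge_len I a y.
Proof. intros. rewrite (edge_sym I a x), (edge_sym I a y). apply edge_lt_l; auto. Qed.

Lemma edge_pos I a b : 0 <= I -> 0 < a -> 0 < b -> 0 < edge_len I a b.
Proof. intros. rewrite edge_eq. apply acosh_pos, Xf_gt1; auto. Qed.

Definition mono2 (f : R -> R -> R) :=
  (forall a x y, 0 < a -> 0 < x -> x < y -> f x a < f y a) /\
  (forall a x y, 0 < a -> 0 < x -> x < y -> f a x < f a y).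

Definition contl (f : R -> R -> R) := forall a b, 0 < a -> 0 < b -> continuity_pt (fun x => f x b) a.

Definition same (u v : R) := (0 <= u /\ 0 <= v) \/ (u <= 0 /\ v <= 0).

Lemma pick x y z : same x y \/ same y z \/ same z x.
Proof. unfold same. destruct (Rle_or_lt 0 x); destruct (Rle_or_lt 0 y); destruct (Rle_or_lt 0 z);
  first [left; lra | right; left; lra | right; right; lra]. Qed.

Lemma mono_swap f : mono2 f -> mono2 (fun x y => f y x).
Proof. intros [H1 H2]; split; intros; [apply H2|apply H1]; auto. Qed.

Lemma mono_wl f a x y : mono2 f -> 0 < a -> 0 < x -> x <= y -> f x a <= f y a.
Proof. intros [H1 _] ? ? [H|<-]; [left; apply H1; auto| right; reflexivity]. Qed.
Lemma mono_wr f a x y : mono2 f -> 0 < a -> 0 < x -> x <= y -> f a x <= f a y.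
Proof. intros [_ H1] ? ? [H|<-]; [left; apply H1; auto| right; reflexivity]. Qed.

Lemma edge_gap f p q eta : mono2 f -> 0 < p -> 0 < q -> 0 < eta ->
  exists g, 0 < g /\ forall p' q', 0 < p' -> 0 < q' -> same (p' - p) (q' - q) ->
    Rabs (f p' q' - f p q) < g -> Rabs (p' - p) < eta /\ Rabs (q' - q) < eta.
Proof.
  intros Hm Hp Hq He. set (e := Rmin eta (Rmin (p/2) (q/2))).
  assert (He1 : e <= eta) by apply Rmin_l.
  assert (He2 : e <= p/2) by (eapply Rle_trans; [apply Rmin_r| apply Rmin_l]).
  assert (He3 : e <= q/2) by (eapply Rle_trans; [apply Rmin_r| apply Rmin_r]).
  assert (He0 : 0 < e) by (repeat apply Rmin_pos; lra).
  destruct Hm as [M1 M2] eqn:Hmm.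
  assert (g1 := M1 q p (p+e) Hq Hp ltac:(lra)).
  assert (g2 := M1 q (p-e) p Hq ltac:(lra) ltac:(lra)).
  assert (g3 := M2 p q (q+e) Hp Hq ltac:(lra)).
  assert (g4 := M2 p (q-e) q Hp ltac:(lra) ltac:(lra)).
  exists (Rmin (Rmin (f (p+e) q - f p q) (f p q - f (p-e) q)) (Rmin (f p (q+e) - f p q) (f p q - f p (q-e)))).
  split; [repeat apply Rmin_pos; lra|].
  intros p' q' Hp' Hq' Hs Hd.
  assert (Hd1 := Rle_lt_trans _ _ _ (Rle_abs _) Hd).
  assert (Hd2 := Rle_lt_trans _ _ _ (Rle_abs _) (eq_ind _ (fun t => t < _) Hd _ (Rabs_minus_sym _ _))).
  assert (m1 := Rmin_l (Rmin (f (p+e) q - f p q) (f p q - f (p-e) q)) (Rmin (f p (q+e) - f p q) (f p q - f p (q-e)))).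
  assert (m2 := Rmin_r (Rmin (f (p+e) q - f p q) (f p q - f (p-e) q)) (Rmin (f p (q+e) - f p q) (f p q - f p (q-e)))).
  assert (m11 := Rmin_l (f (p+e) q - f p q) (f p q - f (p-e) q)).
  assert (m12 := Rmin_r (f (p+e) q - f p q) (f p q - f (p-e) q)).
  assert (m21 := Rmin_l (f p (q+e) - f p q) (f p q - f p (q-e))).
  assert (m22 := Rmin_r (f p (q+e) - f p q) (f p q - f p (q-e))).
  destruct Hs as [[Sa Sb]|[Sa Sb]].
  - assert (A : p' - p < e).
    { destruct (Rlt_or_le (p'-p) e) as [|Hc]; [auto|].
      assert (f (p+e) q <= f p' q) by (apply mono_wl; auto; lra).
      assert (f p' q <= f p' q') by (apply mono_wr; auto; lra). lra. }
    assert (B : q' - q < e).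
    { destruct (Rlt_or_le (q'-q) e) as [|Hc]; [auto|].
      assert (f p (q+e) <= f p q') by (apply mono_wr; auto; lra).
      assert (f p q' <= f p' q') by (apply mono_wl; auto; lra). lra. }
    rewrite !Rabs_right by lra. lra.
  - assert (A : p - p' < e).
    { destruct (Rlt_or_le (p-p') e) as [|Hc]; [auto|].
      assert (f p' q <= f (p-e) q) by (apply mono_wl; auto; lra).
      assert (f p' q' <= f p' q) by (apply mono_wr; auto; lra). lra. }
    assert (B : q - q' < e).
    { destruct (Rlt_or_le (q-q') e) as [|Hc]; [auto|].
      assert (f p q' <= f p (q-e)) by (apply mono_wr; auto; lra).
      assert (f p' q' <= f p q') by (apply mono_wl; auto; lra). lra. }
    rewrite !Rabs_left1 by lra. lra.
Qed.

Lemma edge_third f p q eta : mono2 f -> contl f -> 0 < p -> 0 < q -> 0 < eta ->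
  exists g e1, 0 < g /\ 0 < e1 /\ forall p' q', 0 < p' -> 0 < q' -> Rabs (p' - p) < e1 ->
    Rabs (f p' q' - f p q) < g -> Rabs (q' - q) < eta.
Proof.
  intros Hm Hc Hp Hq He. set (e := Rmin eta (q/2)).
  assert (He1 : e <= eta) by apply Rmin_l.
  assert (He2 : e <= q/2) by apply Rmin_r.
  assert (He0 : 0 < e) by (apply Rmin_pos; lra).
  destruct Hm as [M1 M2] eqn:Hmm.
  assert (g1 := M2 p q (q+e) Hp Hq ltac:(lra)).
  assert (g2 := M2 p (q-e) q Hp ltac:(lra) ltac:(lra)).
  set (G1 := f p (q+e) - f p q). set (G2 := f p q - f p (q-e)).
  destruct (cont_pt_eps _ _ (Hc p (q+e) Hp ltac:(lra)) (G1/2) ltac:(unfold G1; lra)) as [da [Hda Ha]].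
  destruct (cont_pt_eps _ _ (Hc p (q-e) Hp ltac:(lra)) (G2/2) ltac:(unfold G2; lra)) as [db [Hdb Hb]].
  exists (Rmin (G1/2) (G2/2)), (Rmin da db).
  split; [apply Rmin_pos; unfold G1, G2; lra|]. split; [apply Rmin_pos; lra|].
  intros p' q' Hp' Hq' Hpp Hd.
  assert (m1 := Rmin_l (G1/2) (G2/2)). assert (m2 := Rmin_r (G1/2) (G2/2)).
  assert (Ha' := Ha p' (Rlt_le_trans _ _ _ Hpp (Rmin_l _ _))).
  assert (Hb' := Hb p' (Rlt_le_trans _ _ _ Hpp (Rmin_r _ _))).
  cbv beta in Ha', Hb'.
  apply Rabs_def2 in Ha'. apply Rabs_def2 in Hb'. apply Rabs_def2 in Hd.
  apply Rabs_def1.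
  - destruct (Rlt_or_le (q'-q) e) as [|Hcq]; [lra|].
    assert (f p' (q+e) <= f p' q') by (apply mono_wr; auto; lra). unfold G1 in *. lra.
  - destruct (Rlt_or_le (q-q') e) as [|Hcq]; [lra|].
    assert (f p' q' <= f p' (q-e)) by (apply mono_wr; auto; lra). unfold G2 in *. lra.
Qed.

Definition contr (f : R -> R -> R) := forall a b, 0 < a -> 0 < b -> continuity_pt (fun x => f a x) b.

Lemma key f1 f2 f3 : mono2 f1 -> mono2 f2 -> mono2 f3 ->
  contl f1 -> contr f1 -> contl f2 -> contr f2 ->
  forall a b c, 0 < a -> 0 < b -> 0 < c -> forall eps, 0 < eps ->
  exists del, 0 < del /\ forall a' b' c', 0 < a' -> 0 < b' -> 0 < c' ->
    Rabs (f1 a' b' - f1 a b) < del -> Rabs (f2 b' c' - f2 b c) < del ->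
    Rabs (f3 c' a' - f3 c a) < del ->
    Rabs (a' - a) < eps /\ Rabs (b' - b) < eps /\ Rabs (c' - c) < eps.
Proof.
  intros m1 m2 m3 cl1 cr1 cl2 cr2 a b c Ha Hb Hc eps He.
  assert (cs1 : contl (fun x y => f1 y x)) by (intros u v Hu Hv; apply cr1; auto).
  assert (cs2 : contl (fun x y => f2 y x)) by (intros u v Hu Hv; apply cr2; auto).
  destruct (edge_third (fun x y => f1 y x) b a eps (mono_swap _ m1) cs1 Hb Ha He) as [ga [ea [Hga [Hea Ta]]]].
  destruct (edge_third (fun x y => f2 y x) c b eps (mono_swap _ m2) cs2 Hc Hb He) as [gb [eb [Hgb [Heb Tb]]]].
  destruct (edge_third f2 b c eps m2 cl2 Hb Hc He) as [gc [ec [Hgc [Hec Tc]]]].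
  set (e1 := Rmin (Rmin ea eb) (Rmin ec eps)).
  assert (E1 : e1 <= ea) by (unfold e1; eapply Rle_trans; apply Rmin_l).
  assert (E2 : e1 <= eb) by (unfold e1; eapply Rle_trans; [apply Rmin_l|apply Rmin_r]).
  assert (E3 : e1 <= ec) by (unfold e1; eapply Rle_trans; [apply Rmin_r|apply Rmin_l]).
  assert (E4 : e1 <= eps) by (unfold e1; eapply Rle_trans; apply Rmin_r).
  assert (E0 : 0 < e1) by (unfold e1; repeat apply Rmin_pos; lra).
  destruct (edge_gap f1 a b e1 m1 Ha Hb E0) as [G1 [HG1 P1]].
  destruct (edge_gap f2 b c e1 m2 Hb Hc E0) as [G2 [HG2 P2]].
  destruct (edge_gap f3 c a e1 m3 Hc Ha E0) as [G3 [HG3 P3]].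
  set (del := Rmin (Rmin (Rmin ga gb) gc) (Rmin G1 (Rmin G2 G3))).
  assert (D1 : del <= ga) by (unfold del; repeat (eapply Rle_trans; [apply Rmin_l|]); lra).
  assert (D2 : del <= gb) by (unfold del; eapply Rle_trans; [apply Rmin_l|]; eapply Rle_trans; [apply Rmin_l|]; apply Rmin_r).
  assert (D3 : del <= gc) by (unfold del; eapply Rle_trans; [apply Rmin_l|]; apply Rmin_r).
  assert (D4 : del <= G1) by (unfold del; eapply Rle_trans; [apply Rmin_r|]; apply Rmin_l).
  assert (D5 : del <= G2) by (unfold del; eapply Rle_trans; [apply Rmin_r|]; eapply Rle_trans; [apply Rmin_r|]; apply Rmin_l).
  assert (D6 : del <= G3) by (unfold del; eapply Rle_trans; [apply Rmin_r|]; eapply Rle_trans; [apply Rmin_r|]; apply Rmin_r).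
  assert (D0 : 0 < del) by (unfold del; repeat apply Rmin_pos; lra).
  exists del. split; [exact D0|].
  intros a' b' c' Ha' Hb' Hc' H1 H2 H3.
  destruct (pick (a'-a) (b'-b) (c'-c)) as [S|[S|S]].
  - destruct (P1 a' b' Ha' Hb' S ltac:(lra)) as [A B].
    assert (C := Tc b' c' Hb' Hc' ltac:(lra) ltac:(lra)). lra.
  - destruct (P2 b' c' Hb' Hc' S ltac:(lra)) as [B C].
    assert (A := Ta b' a' Hb' Ha' ltac:(lra) ltac:(lra)). lra.
  - destruct (P3 c' a' Hc' Ha' S ltac:(lra)) as [C A].
    assert (B := Tb c' b' Hc' Hb' ltac:(lra) ltac:(lra)). lra.
Qed.

Lemma Ck_acosh n : forall f, Ck n f -> (forall p, pos3 p -> 1 < f p) -> Ck n (fun p => acosh (f p)).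
Proof.
  intros f Hf HP. destruct n as [|n].
  - split; [|exact I]. apply (Ck0_comp acosh (fun y => 1 < y) _ acosh_deriv); [eapply Ck_cont; eassumption| exact HP].
  - apply (CkS_comp acosh _ (fun y => 1 < y) n acosh_deriv); auto.
    intros g Hg Hpos. apply Ck_inv.
    + apply Ck_sqrt.
      * apply (Ck_ext n (fun p => g p * g p + -1)); [apply Ck_plus; [apply Ck_mult; auto| apply Ck_const]|].
        intros; ring.
      * intros p Hp. specialize (Hpos p Hp). nra.
    + intros p Hp. apply sqrt_lt_R0. specialize (Hpos p Hp). nra.
Qed.

Lemma smooth_edge I u v : 0 <= I -> (forall n, Ck n u) -> (forall n, Ck n v) ->
  (forall p, pos3 p -> 0 < u p) -> (forall p, pos3 p -> 0 < v p) ->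
  smooth3 (fun p => edge_len I (u p) (v p)).
Proof.
  intros HI Hu Hv Pu Pv n. apply Ck_acosh.
  - apply (Ck_ext n (fun p => cosh (u p) * cosh (v p) + I * sinh (u p) * sinh (v p))); [|reflexivity].
    apply Ck_plus; apply Ck_mult.
    + apply Ck_coshsinh; auto.
    + apply Ck_coshsinh; auto.
    + apply Ck_mult; [apply Ck_const| apply Ck_coshsinh; auto].
    + apply Ck_coshsinh; auto.
  - intros p Hp. apply Xf_gt1; auto.
Qed.

Lemma zero_of_small x : (forall eps, 0 < eps -> Rabs x < eps) -> x = 0.
Proof. intros H. destruct (Req_dec x 0) as [|Hn]; [auto|].
  assert (Hp := Rabs_pos_lt x Hn). specialize (H _ Hp). lra. Qed.

Theorem mainTheorem7 (Iij Ijk Iki : R) (hij : 0 <= Iij) (hjk : 0 <= Ijk) (hki : 0 <= Iki) :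
  (forall r, pos3 r -> pos3 (rhoH Iij Ijk Iki r)) /\
  (forall r s, pos3 r -> pos3 s -> rhoH Iij Ijk Iki r = rhoH Iij Ijk Iki s -> r = s) /\
  smooth_embedding3 (rhoH Iij Ijk Iki).
Proof.
  assert (M : forall I, 0 <= I -> mono2 (edge_len I)).
  { intros I HI; split; intros; [apply edge_lt_l| apply edge_lt_r]; auto. }
  assert (CL : forall I, 0 <= I -> contl (edge_len I)).
  { intros I HI a b Ha Hb. eapply dpl_cont. apply edge_deriv_l; auto. }
  assert (CR : forall I, 0 <= I -> contr (edge_len I)).
  { intros I HI a b Ha Hb. eapply dpl_cont. apply edge_deriv_r; auto. }
  assert (K := key _ _ _ (M _ hij) (M _ hjk) (M _ hki) (CL _ hij) (CR _ hij) (CL _ hjk) (CR _ hjk)).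
  assert (INJ : forall r s, pos3 r -> pos3 s -> rhoH Iij Ijk Iki r = rhoH Iij Ijk Iki s -> r = s).
  { intros [[a b] c] [[a' b'] c'] [Ha [Hb Hc]] [Ha' [Hb' Hc']] E. simpl in E. injection E as E1 E2 E3.
    assert (Z : forall eps, 0 < eps -> Rabs (a' - a) < eps /\ Rabs (b' - b) < eps /\ Rabs (c' - c) < eps).
    { intros eps He. destruct (K a b c Ha Hb Hc eps He) as [del [Hd P]].
      apply P; auto; [rewrite E1| rewrite E2| rewrite E3]; rewrite Rminus_diag, Rabs_R0; auto. }
    assert (A : a' - a = 0) by (apply zero_of_small; intros; apply Z; auto).
    assert (B : b' - b = 0) by (apply zero_of_small; intros; apply Z; auto).
    assert (C : c' - c = 0) by (apply zero_of_small; intros; apply Z; auto).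
    f_equal; [f_equal|]; lra. }
  assert (P1 : forall p, pos3 p -> 0 < comp1 p) by (intros [[a b] c] [? [? ?]]; simpl; auto).
  assert (P2 : forall p, pos3 p -> 0 < comp2 p) by (intros [[a b] c] [? [? ?]]; simpl; auto).
  assert (P3 : forall p, pos3 p -> 0 < comp3 p) by (intros [[a b] c] [? [? ?]]; simpl; auto).
  split; [|split; [exact INJ|]].
  { intros [[a b] c] [Ha [Hb Hc]]. simpl. repeat split; apply edge_pos; auto. }
  split; [|split; [|split; [|split; [|split; [exact INJ|]]]]].
  - intros n. apply (Ck_ext n (fun p => edge_len Iij (comp1 p) (comp2 p))).
    + apply smooth_edge; auto; intros; [apply Ck_p1| apply Ck_p2].
    + intros [[a b] c]; reflexivity.
  - intros n. apply (Ck_ext n (fun p => edge_len Ijk (comp2 p) (comp3 p))).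
    + apply smooth_edge; auto; intros; [apply Ck_p2| apply Ck_p3].
    + intros [[a b] c]; reflexivity.
  - intros n. apply (Ck_ext n (fun p => edge_len Iki (comp3 p) (comp1 p))).
    + apply smooth_edge; auto; intros; [apply Ck_p3| apply Ck_p1].
    + intros [[a b] c]; reflexivity.
  - intros a b c [Ha [Hb Hc]].
    exists (Dl Iij a b), (Dl Iij b a), 0, 0, (Dl Ijk b c), (Dl Ijk c b), (Dl Iki a c), 0, (Dl Iki c a).
    split; [|split; [|split]].
    + split; [|split].
      * exact (edge_deriv_l Iij a b hij Ha Hb).
      * exact (edge_deriv_r Iij a b hij Ha Hb).
      * exact (derivable_pt_lim_const (edge_len Iij a b) c).
    + split; [|split].
      * exact (derivable_pt_lim_const (edge_len Ijk b c) a).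
      * exact (edge_deriv_l Ijk b c hjk Hb Hc).
      * exact (edge_deriv_r Ijk b c hjk Hb Hc).
    + split; [|split].
      * exact (edge_deriv_r Iki c a hki Hc Ha).
      * exact (derivable_pt_lim_const (edge_len Iki c a) b).
      * exact (edge_deriv_l Iki c a hki Hc Ha).
    + unfold det3.
      assert (q1 := Dl_pos Iij a b hij Ha Hb). assert (q2 := Dl_pos Iij b a hij Hb Ha).
      assert (q3 := Dl_pos Ijk b c hjk Hb Hc). assert (q4 := Dl_pos Ijk c b hjk Hc Hb).
      assert (q5 := Dl_pos Iki a c hki Ha Hc). assert (q6 := Dl_pos Iki c a hki Hc Ha).
      assert (0 < Dl Iij a b * Dl Ijk b c * Dl Iki c a) by (apply Rmult_lt_0_compat; [apply Rmult_lt_0_compat|]; assumption).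
      assert (0 < Dl Iij b a * Dl Ijk c b * Dl Iki a c) by (apply Rmult_lt_0_compat; [apply Rmult_lt_0_compat|]; assumption).
      nra.
  - intros [[a b] c] [Ha [Hb Hc]] eps He.
    destruct (K a b c Ha Hb Hc eps He) as [del [Hd P]].
    exists del; split; [exact Hd|].
    intros [[a' b'] c'] [Ha' [Hb' Hc']] Hdist. simpl rhoH in Hdist.
    destruct (dist3_bounds (edge_len Iij a b) (edge_len Ijk b c) (edge_len Iki c a)
       (edge_len Iij a' b') (edge_len Ijk b' c') (edge_len Iki c' a')) as [B1 [B2 B3]].
    rewrite Rabs_minus_sym in B1, B2, B3.
    destruct (P a' b' c' Ha' Hb' Hc' ltac:(lra) ltac:(lra) ltac:(lra)) as [A [B C]].
    rewrite Rabs_minus_sym in A, B, C. apply dist3_lt; auto.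
Qed.
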